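(* If the $r\times r$ minors of an $n\times n$ symmetric matrix of indeterminates do not form a tropical basis, then the $r\times r$ minors of an $(n+1)\times(n+1)$ symmetric matrix of indeterminates do not form a tropical basis.
   Context: Let $\tilde K$ be the field of Hahn series $\sum_{\alpha\in A}c_\alpha t^\alpha$ ($A\subset\mathbb R$ well-ordered, $c_\alpha\in\mathbb C$); for nonzero $a\in\tilde K$, $\deg(a)$ is the smallest exponent with nonzero coefficient. A symmetric lift of a real symmetric matrix $A$ is a symmetric matrix $\tilde A$ over $\tilde K$ with all entries nonzero and $\deg(\tilde a_{i,j})=A_{i,j}$. For an $r\times r$ submatrix of $A$ with row index set $I$ and column index set $J$, each bijection $\rho:I\to J$ gives a monomial $\prod_{i\in I}X_{i,\rho(i)}$ in commuting variables subject to $X_{i,j}=X_{j,i}$, with value $\sum_{i\in I}A_{i,\rho(i)}$; the submatrix is symmetrically tropically singular if the minimum value is attained by at least two distinct monomials. The $r\times r$ minors of an $n\times n$ symmetric matrix of indeterminates form a tropical basis if for every real symmetric $n\times n$ matrix $A$: every $r\times r$ submatrix of $A$ is symmetrically tropically singular if and only if $A$ has a symmetric lift of rank at most $r-1$ (equivalently, the tropical prevariety of the tropicalized minors equals the tropicalization of the variety they define). *)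

(* Defs.v *)
From mathcomp Require Import all_boot all_order all_algebra.
From mathcomp Require Import boolp classical_sets fsbigop reals Rstruct.
From mathcomp.real_closed Require Import complex.

Set Implicit Arguments.
Unset Strict Implicit.
Unset Printing Implicit Defensive.
Import Order.TTheory GRing.Theory Num.Theory.
Local Open Scope classical_set_scope.
Local Open Scope ring_scope.

Notation RR := Rdefinitions.R.
Notation CC := (complex RR).

Definition well_ordered (A : set RR) : Prop :=
  forall B : set RR, B `<=` A -> B !=set0 ->
    exists2 b, B b & forall x, B x -> b <= x.

Definition hsupp (c : RR -> CC) : set RR := [set a | c a != 0].

Record hahn := Hahn {
  hcoef : RR -> CC ;
  hcoef_wo : well_ordered (hsupp hcoef) }.

(* coefficient of t^g in the product f * g of two Hahn series:
   sum over a of f_a g_(g-a) (the sum has finitely many nonzero terms). *)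
Definition hmulc (f g : hahn) (x : RR) : CC :=
  \sum_(a \in [set: RR]) (hcoef f a * hcoef g (x - a)).

Definition hdeg_is (f : hahn) (d : RR) : Prop :=
  hcoef f d != 0 /\ forall a, a < d -> hcoef f a = 0.

Definition hnonzero (f : hahn) : Prop := exists a, hcoef f a != 0.

Definition sym_lift (n : nat) (A : 'M[RR]_n) (L : 'I_n -> 'I_n -> hahn) : Prop :=
  (forall i j, L i j = L j i) /\
  (forall i j, hnonzero (L i j) /\ hdeg_is (L i j) (A i j)).

(* rank of the n x n matrix L over the field of Hahn series is at most k:
   L = B C with B an n x k and C a k x n matrix over the Hahn series field
   (entrywise equality of coefficients). *)
Definition rank_le (n : nat) (L : 'I_n -> 'I_n -> hahn) (k : nat) : Prop :=
  exists (B : 'I_n -> 'I_k -> hahn) (C : 'I_k -> 'I_n -> hahn),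
    forall i j x, hcoef (L i j) x = \sum_(l < k) hmulc (B i l) (C l j) x.

Definition is_bij (n : nat) (I J : {set 'I_n}) (rho : 'I_n -> 'I_n) : Prop :=
  {in I &, injective rho} /\ rho @: I = J.

Definition mon_val (n : nat) (A : 'M[RR]_n) (I : {set 'I_n}) (rho : 'I_n -> 'I_n) : RR :=
  \sum_(i in I) A i (rho i).

(* exponent of the variable X_{a,b} = X_{b,a} in the monomial prod_{i in I} X_{i, rho i} *)
Definition mon_exp (n : nat) (I : {set 'I_n}) (rho : 'I_n -> 'I_n) (a b : 'I_n) : nat :=
  #|[set i in I | ((i == a) && (rho i == b)) || ((i == b) && (rho i == a))]|.

Definition sym_trop_singular (n : nat) (A : 'M[RR]_n) (I J : {set 'I_n}) : Prop :=
  exists rho1 rho2 : 'I_n -> 'I_n,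
    [/\ is_bij I J rho1, is_bij I J rho2,
        (forall rho, is_bij I J rho -> mon_val A I rho1 <= mon_val A I rho),
        mon_val A I rho2 = mon_val A I rho1 &
        exists a b, mon_exp I rho1 a b <> mon_exp I rho2 a b].

Definition tropical_basis (n r : nat) : Prop :=
  forall A : 'M[RR]_n, A^T = A ->
    ((forall I J : {set 'I_n}, #|I| = r -> #|J| = r -> sym_trop_singular A I J)
     <-> exists L, sym_lift A L /\ rank_le L r.-1).

(* Main.v *)
Require Import Defs.
From mathcomp Require Import all_boot all_order all_algebra all_fingroup.
From mathcomp Require Import boolp classical_sets fsbigop reals Rstruct.
From mathcomp.real_closed Require Import complex.
From mathcomp Require Import zify.
From Stdlib Require Import Classical.
Set Implicit Arguments. Unset Strict Implicit. Unset Printing Implicit Defensive.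
Import Order.TTheory GRing.Theory Num.Theory.

Definition pairp m (a b x y : 'I_m) : bool :=
  ((x == a) && (y == b)) || ((x == b) && (y == a)).

Lemma mon_exp_pairp m (I : {set 'I_m}) rho a b :
  mon_exp I rho a b = #|[set i in I | pairp a b i (rho i)]|.
Proof. by []. Qed.

Lemma card_sum m (I : {set 'I_m}) (P : 'I_m -> bool) :
  #|[set i in I | P i]| = \sum_(i in I) (P i : nat).
Proof.
rewrite -sum1_card big_mkcond [RHS]big_mkcond /=.
by apply: eq_bigr => i _; rewrite inE; case: (i \in I); case: (P i).
Qed.

Lemma pair_sum m (g : 'I_m -> 'I_m -> bool) (gs : forall x y, g x y = g y x) x y :
  \sum_(a < m) \sum_(b < m | a <= b) (g a b * pairp a b x y)%N = g x y.
Proof.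
wlog hxy : x y / x <= y.
  move=> H; case: (leqP x y) => [/H //|/ltnW h].
  rewrite gs -(H y x h); apply: eq_bigr => a _; apply: eq_bigr => b _.
  by rewrite /pairp orbC andbC [X in _ || X]andbC.
have E : forall a b : 'I_m, a <= b -> pairp a b x y = (a == x) && (b == y).
  move=> a b hab; rewrite /pairp; apply/idP/idP.
    case/orP => /andP[/eqP xa /eqP yb]; first by rewrite -xa -yb !eqxx.
    have exy : x = y.
      by apply/val_inj/eqP; rewrite eqn_leq hxy xa yb hab.
    by rewrite xa yb; rewrite xa yb in exy; rewrite exy eqxx.
  by case/andP => /eqP -> /eqP ->; rewrite !eqxx.
under eq_bigr do under eq_bigr => b hb do rewrite E //.
rewrite (bigD1 x) //= (bigD1 y) ?hxy //= !eqxx muln1.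
rewrite big1 ?addn0; last by move=> b /andP[_ /negbTE ->]; rewrite andbF muln0.
rewrite big1 ?addn0 //; move=> a /negbTE ax.
by rewrite big1 // => b _; rewrite ax muln0.
Qed.

Lemma count_gen m (I : {set 'I_m}) (rho : 'I_m -> 'I_m) (g : 'I_m -> 'I_m -> bool)
  (gs : forall x y, g x y = g y x) :
  #|[set i in I | g i (rho i)]| =
  \sum_(a < m) \sum_(b < m | a <= b) (g a b * mon_exp I rho a b)%N.
Proof.
under [RHS]eq_bigr do under eq_bigr do rewrite mon_exp_pairp card_sum big_distrr.
under [RHS]eq_bigr do rewrite exchange_big.
rewrite exchange_big card_sum; apply: eq_bigr => i _.
by rewrite -(pair_sum gs i (rho i)).
Qed.

Lemma count_eq m (I : {set 'I_m}) (r1 r2 : 'I_m -> 'I_m) (g : 'I_m -> 'I_m -> bool)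
  (gs : forall x y, g x y = g y x) :
  (forall a b, mon_exp I r1 a b = mon_exp I r2 a b) ->
  #|[set i in I | g i (r1 i)]| = #|[set i in I | g i (r2 i)]|.
Proof.
move=> H; rewrite !count_gen //; apply: eq_bigr => a _; apply: eq_bigr => b _.
by rewrite H.
Qed.
Section Transfer.
Variables (m m' : nat) (A : 'M[RR]_m) (A' : 'M[RR]_m') (s : 'I_m' -> 'I_m).
Variables (I' J' : {set 'I_m'}).
Hypothesis hA : forall i j, A' i j = A (s i) (s j).
Hypothesis hI : {in I' &, injective s}.
Hypothesis hJ : {in J' &, injective s}.

Definition Rel (rho : 'I_m -> 'I_m) (rho' : 'I_m' -> 'I_m') :=
  forall i, i \in I' -> s (rho' i) = rho (s i).

Lemma tr_val rho rho' : Rel rho rho' -> mon_val A' I' rho' = mon_val A (s @: I') rho.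
Proof.
move=> R; rewrite /mon_val big_imset //=; apply: eq_bigr => i hi.
by rewrite hA R.
Qed.

Lemma tr_bij1 rho rho' : Rel rho rho' -> is_bij I' J' rho' ->
  is_bij (s @: I') (s @: J') rho.
Proof.
move=> R [inj' im']; split.
  move=> x y /imsetP[x' hx' ->] /imsetP[y' hy' ->].
  rewrite -!R // => e; congr s; apply: inj' => //.
  by apply: hJ => //; rewrite -im'; apply: imset_f.
rewrite -imset_comp -im' -imset_comp; apply: eq_in_imset => i hi /=.
by rewrite R.
Qed.

Lemma tr_bij2 rho rho' : Rel rho rho' -> {in I', forall i, rho' i \in J'} ->
  is_bij (s @: I') (s @: J') rho -> is_bij I' J' rho'.
Proof.
move=> R inJ [inj im]; split.
  move=> x y hx hy e; apply: hI => //.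
  by apply: inj; rewrite ?imset_f // -!R // e.
have E : s @: (rho' @: I') = s @: J'.
  rewrite -imset_comp -im -imset_comp; apply: eq_in_imset => i hi /=.
  by rewrite R.
apply/setP => j; apply/idP/idP.
  by case/imsetP => i hi ->; apply: inJ.
move=> hj; have : s j \in s @: (rho' @: I') by rewrite E imset_f.
case/imsetP => k hk ek.
have hk' : k \in J' by case/imsetP: hk => i hi ->; apply: inJ.
by rewrite (hJ hj hk' ek).
Qed.

Lemma tr_exp rho rho' a b : Rel rho rho' ->
  mon_exp (s @: I') rho a b = #|[set i in I' | pairp a b (s i) (s (rho' i))]|.
Proof.
move=> R; rewrite mon_exp_pairp.
have -> : [set i in s @: I' | pairp a b i (rho i)] =
          s @: [set i in I' | pairp a b (s i) (s (rho' i))].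
  apply/setP => x; rewrite inE; apply/andP/imsetP.
    case=> /imsetP[i hi ->] p; exists i => //; by rewrite inE hi R.
  case=> i; rewrite inE => /andP[hi p] ->; split; first exact: imset_f.
  by rewrite -R.
rewrite card_in_imset // => x y; rewrite !inE => /andP[hx _] /andP[hy _].
exact: hI.
Qed.

Definition liftr (rho : 'I_m -> 'I_m) (i : 'I_m') : 'I_m' :=
  odflt i [pick j in J' | s j == rho (s i)].

Lemma liftr_prop rho : is_bij (s @: I') (s @: J') rho ->
  Rel rho (liftr rho) /\ {in I', forall i, liftr rho i \in J'}.
Proof.
move=> [_ im].
have H : forall i, i \in I' -> liftr rho i \in J' /\ s (liftr rho i) = rho (s i).
  move=> i hi; rewrite /liftr; case: pickP => [j /andP[hj /eqP e]|H] //=.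
  have : rho (s i) \in s @: J' by rewrite -im; apply: imset_f; apply: imset_f.
  by case/imsetP => j hj e; have := H j; rewrite hj e eqxx.
by split => i hi; have [] := H i hi.
Qed.

Lemma transfer : sym_trop_singular A (s @: I') (s @: J') -> sym_trop_singular A' I' J'.
Proof.
case=> r1 [r2 [b1 b2 opt eqv [a [b hab]]]].
have [R1 J1] := liftr_prop b1; have [R2 J2] := liftr_prop b2.
exists (liftr r1), (liftr r2); split.
- exact: tr_bij2 R1 J1 b1.
- exact: tr_bij2 R2 J2 b2.
- move=> rho'' bij''.
  pose rho y := if [pick i in I' | s i == y] is Some i then s (rho'' i) else y.
  have R : Rel rho rho''.
    move=> i hi; rewrite /rho; case: pickP => [j /andP[hj /eqP e]|H].
      by rewrite (hI hj hi e).
    by have := H i; rewrite hi eqxx.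
  rewrite (tr_val R1) (tr_val R); apply: opt; exact: tr_bij1 R bij''.
- by rewrite (tr_val R1) (tr_val R2).
- apply: NNPP => H; apply: hab.
  have H' : forall a' b', mon_exp I' (liftr r1) a' b' = mon_exp I' (liftr r2) a' b'.
    by move=> a' b'; apply: NNPP => ne; apply: H; exists a', b'.
  rewrite (tr_exp _ _ R1) (tr_exp _ _ R2).
  have gs : forall x y, pairp a b (s x) (s y) = pairp a b (s y) (s x).
    by move=> x y; rewrite /pairp orbC andbC [X in _ || X]andbC.
  exact: (count_eq gs H').
Qed.
End Transfer.
Lemma exists_bij m (I J : {set 'I_m}) : #|I| = #|J| -> exists rho, is_bij I J rho.
Proof.
move=> hc.
pose rho i := nth i (enum J) (index i (enum I)).
have hlt : forall i, i \in I -> index i (enum I) < size (enum J).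
  by move=> i hi; rewrite -cardE -hc cardE index_mem mem_enum.
have hin : forall i, i \in I -> rho i \in J.
  by move=> i hi; rewrite -mem_enum mem_nth // hlt.
have inj : {in I &, injective rho}.
  move=> x y hx hy; rewrite /rho (set_nth_default y) ?hlt // => /eqP.
  rewrite nth_uniq ?hlt ?enum_uniq // => /eqP e.
  by rewrite -(nth_index x (_ : x \in enum I)) ?mem_enum // e nth_index ?mem_enum.
exists rho; split => //.
apply/eqP; rewrite eqEcard card_in_imset // hc leqnn andbT.
by apply/fintype.subsetP => j /imsetP[i hi ->]; apply: hin.
Qed.

Lemma exists_opt m (A : 'M[RR]_m) (I J : {set 'I_m}) : #|I| = #|J| ->
  exists rho, is_bij I J rho /\
    forall rho', is_bij I J rho' -> (mon_val A I rho <= mon_val A I rho')%R.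
Proof.
move=> hc; have [r0 b0] := exists_bij hc.
pose P (f : {ffun 'I_m -> 'I_m}) : bool :=
  [forall x in I, forall y in I, (f x == f y) ==> (x == y)] && (f @: I == J).
have PE : forall f : {ffun 'I_m -> 'I_m}, P f <-> is_bij I J f.
  move=> f; split.
    case/andP => /forallP H /eqP e; split => // x y hx hy exy.
    by have := H x; rewrite hx /= => /forallP/(_ y); rewrite hy exy eqxx /= => /eqP.
  case=> inj e; apply/andP; split; last by rewrite e.
  apply/forallP => x; apply/implyP => hx; apply/forallP => y; apply/implyP => hy.
  by apply/implyP => /eqP /inj -> //.
have P0 : P (finfun r0).
  apply/PE; case: b0 => inj e; split.
    by move=> x y hx hy; rewrite !ffunE; apply: inj.
  by rewrite -e; apply: eq_imset => i; rewrite ffunE.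
case: (@arg_minP _ _ {ffun 'I_m -> 'I_m} _ P (fun f : {ffun 'I_m -> 'I_m} => mon_val A I f) P0) => f Pf fmin.
exists f; split; first exact/PE.
move=> rho' b'.
have Pr : P (finfun rho').
  apply/PE; case: b' => inj e; split.
    by move=> x y hx hy; rewrite !ffunE; apply: inj.
  by rewrite -e; apply: eq_imset => i; rewrite ffunE.
have := fmin _ Pr.
have -> : mon_val A I (finfun rho') = mon_val A I rho'.
  by apply: eq_bigr => i _; rewrite ffunE.
by [].
Qed.

Lemma Q_tr m m' (A : 'M[RR]_m) (A' : 'M[RR]_m') (s : 'I_m -> 'I_m') k :
  (forall i j, A i j = A' (s i) (s j)) ->
  (exists L, sym_lift A' L /\ rank_le L k) -> exists L, sym_lift A L /\ rank_le L k.
Proof.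
move=> hA [L [[hs hd] [B [C hBC]]]].
exists (fun i j => L (s i) (s j)); split; [split|].
- by move=> i j; rewrite hs.
- by move=> i j; rewrite hA; exact: hd.
- by exists (fun i l => B (s i) l), (fun l j => C l (s j)) => i j x; exact: hBC.
Qed.

Section Dup.
Variables (m : nat) (A : 'M[RR]_m) (u v : 'I_m).
Hypothesis huv : u != v.
Hypothesis hrow : forall i j, A (tperm u v i) j = A i j.
Hypothesis hcol : forall i j, A i (tperm u v j) = A i j.

Lemma tperm_set (S : {set 'I_m}) : u \in S -> v \in S -> tperm u v @: S = S.
Proof.
move=> hu hv; apply/eqP; rewrite eqEcard card_imset ?leqnn ?andbT; last exact: perm_inj.
apply/fintype.subsetP => j /imsetP[i hi ->].
by case: tpermP => [_|_|_ _].
Qed.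

Lemma dupI (I J : {set 'I_m}) : #|I| = #|J| -> u \in I -> v \in I ->
  sym_trop_singular A I J.
Proof.
move=> hc hu hv; have [r1 [[inj1 im1] o1]] := exists_opt A hc.
have tI := tperm_set hu hv.
have tin : forall i, i \in I -> tperm u v i \in I.
  by move=> i hi; rewrite -tI imset_f.
exists r1, (fun i => r1 (tperm u v i)); split; first by split.
- split.
    move=> x y hx hy /inj1 e; apply: (perm_inj (s := tperm u v)).
    by apply: e; apply: tin.
  by rewrite imset_comp tI.
- exact: o1.
- rewrite /mon_val.
  transitivity (\sum_(i in I) A (tperm u v i) (r1 (tperm u v i)))%R.
    by apply: eq_bigr => i _; rewrite hrow.
  rewrite -[in RHS]tI big_imset //= => x y _ _; exact: perm_inj.
- exists u, (r1 u); rewrite !mon_exp_pairp => E.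
  have huI : r1 v != r1 u.
    by apply/negP => /eqP /inj1 e; move: huv; rewrite e // eqxx.
  suff : [set i in I | pairp u (r1 u) i (r1 (tperm u v i))] \proper
         [set i in I | pairp u (r1 u) i (r1 i)].
    by move/proper_card; rewrite E ltnn.
  apply/properP; split.
    apply/fintype.subsetP => i; rewrite !inE => /andP[hi P2]; rewrite hi /=.
    case: (eqVneq i u) => [->|iu]; first by rewrite /pairp !eqxx.
    case: (eqVneq i v) => [ev|iv].
      have nvu : (v == u) = false by rewrite eq_sym (negbTE huv).
      move: P2; rewrite ev tpermR /pairp nvu /= => /andP[/eqP vr /eqP ru].
      by move: huv; rewrite vr ru eqxx.

    have e : tperm u v i = i by rewrite tpermD // eq_sym.
    by rewrite e in P2.
  exists u; first by rewrite !inE hu /pairp !eqxx.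
  rewrite !inE hu tpermL /pairp eqxx (negbTE huI) /=.
  apply/negP => /andP[/eqP e1 /eqP e2].
  by move: huI; rewrite -e1 e2 eqxx.
Qed.

Lemma dupJ (I J : {set 'I_m}) : #|I| = #|J| -> u \in J -> v \in J ->
  sym_trop_singular A I J.
Proof.
move=> hc hu hv; have [r1 [[inj1 im1] o1]] := exists_opt A hc.
have tJ := tperm_set hu hv.
exists r1, (fun i => tperm u v (r1 i)); split; first by split.
- split.
    by move=> x y hx hy /perm_inj /inj1; apply.
  by rewrite (imset_comp (tperm u v) r1) im1 tJ.
- exact: o1.
- by rewrite /mon_val; apply: eq_bigr => i _; rewrite hcol.
- have : u \in r1 @: I by rewrite im1.
  case/imsetP => p hp ep.
  exists p, u; rewrite !mon_exp_pairp => E.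
  suff : [set i in I | pairp p u i (tperm u v (r1 i))] \proper
         [set i in I | pairp p u i (r1 i)].
    by move/proper_card; rewrite E ltnn.
  apply/properP; split.
    apply/fintype.subsetP => i; rewrite !inE => /andP[hi P2]; rewrite hi /=.
    case: (eqVneq (r1 i) u) => [e|iu].
      have ip : i = p by apply: inj1; rewrite // e.
      by rewrite /pairp e ip !eqxx.
    case: (eqVneq (r1 i) v) => [ev|iv].
      move: P2; rewrite ev tpermR /pairp eqxx andbT.
      case/orP => [/eqP ip| /andP[/eqP iu' /eqP up]].
        by move: ev; rewrite ip -ep => e; move: huv; rewrite e eqxx.
      by move: ev; rewrite iu' up -ep => e; move: huv; rewrite e eqxx.
    have e : tperm u v (r1 i) = r1 i by rewrite tpermD // eq_sym.
    by rewrite e in P2.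
  exists p; first by rewrite !inE hp /pairp !eqxx -ep eqxx.
  rewrite !inE hp -ep tpermL /pairp eqxx /= eq_sym (negbTE huv) /=.
  apply/negP => /andP[/eqP e1 /eqP e2].
  by move: huv; rewrite e2 e1 eqxx.
Qed.
End Dup.

Definition hz : hahn.
Proof.
refine (@Hahn (fun _ => 0%R) _).
by move=> B sB [x Bx]; have := sB x Bx; rewrite /hsupp /= eqxx.
Defined.

Section Main.
Variable k : nat.
Definition sg (i : 'I_k.+2) : 'I_k.+1 := inord (minn i k).
Definition io (i : 'I_k.+1) : 'I_k.+2 := widen_ord (leqnSn k.+1) i.
Definition uu : 'I_k.+2 := inord k.
Definition vv : 'I_k.+2 := ord_max.

Lemma sg_val i : (sg i : nat) = minn i k.
Proof. by rewrite /sg inordK // ltnS geq_minr. Qed.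

Lemma sg_io i : sg (io i) = i.
Proof. apply: val_inj => /=; rewrite sg_val /=; have := ltn_ord i; lia. Qed.

Lemma io_inj : injective io.
Proof. by move=> x y /(congr1 (@nat_of_ord _)) /= e; apply: val_inj. Qed.

Lemma uu_val : (uu : nat) = k.
Proof. by rewrite /uu inordK. Qed.

Lemma uv : uu != vv.
Proof. by apply/eqP => /(congr1 (@nat_of_ord _)); rewrite uu_val /=; lia. Qed.

Lemma sg_tperm i : sg (tperm uu vv i) = sg i.
Proof.
case: tpermP => [->|->|_ _] //; apply: val_inj => /=; rewrite !sg_val uu_val /=; lia.
Qed.

Lemma sg_inj (S : {set 'I_k.+2}) : ~~ ((uu \in S) && (vv \in S)) -> {in S &, injective sg}.
Proof.
move=> H x y hx hy /(congr1 (@nat_of_ord _)); rewrite !sg_val => e.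
case: (eqVneq x y) => // nxy.
have hx' := ltn_ord x; have hy' := ltn_ord y.
have : (x : nat) != y by apply: contra nxy => /eqP e'; apply/eqP/val_inj.
move=> nxy'.
have [[ex ey]|[ex ey]] : (x = uu /\ y = vv) \/ (x = vv /\ y = uu).
  case: (ltnP x k.+1) => lx.
    left; split; apply: val_inj => /=; rewrite ?uu_val; lia.
  right; split; apply: val_inj; rewrite /= ?uu_val; lia.
- by move: H; rewrite -ex -ey hx hy.
- by move: H; rewrite -ex -ey hx hy.
Qed.
End Main.

Theorem corollary3 (n r : nat) :
  (0 < r)%N -> ~ tropical_basis n r -> ~ tropical_basis n.+1 r.
Proof.
move=> r0 nTB TB1; apply: nTB.
case: n TB1 => [|k] TB1 A hAs.
  split=> _.
    exists (fun _ _ => hz); split; first by split; case.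
    by exists (fun _ _ => hz), (fun _ _ => hz); case.
  move=> I J hI; exfalso; have := max_card I; rewrite card_ord hI; lia.
pose A' : 'M[RR]_k.+2 := (\matrix_(i, j) A (sg i) (sg j))%R.
have hA' : forall i j, A' i j = A (sg i) (sg j) by move=> i j; rewrite mxE.
have hAsym : forall i j, A j i = A i j.
  by move=> i j; have := congr1 (fun M : 'M[RR]_k.+1 => M i j) hAs; rewrite /= mxE.
have hA'T : (A'^T)%R = A' by apply/matrixP => i j; rewrite !mxE hAsym.
have hback : forall i j, A i j = A' (io i) (io j) by move=> i j; rewrite hA' !sg_io.
have TBA := TB1 A' hA'T.
split.
- move=> PA; apply: (Q_tr hback); apply: TBA.1 => I' J' hI' hJ'.
  have hrow : forall i j, A' (tperm (uu k) (vv k) i) j = A' i j.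
    by move=> i j; rewrite !hA' sg_tperm.
  have hcol : forall i j, A' i (tperm (uu k) (vv k) j) = A' i j.
    by move=> i j; rewrite !hA' sg_tperm.
  have hc : #|I'| = #|J'| by rewrite hI' hJ'.
  case: (boolP ((uu k \in I') && (vv k \in I'))) => [/andP[hu hv]|nI].
    exact: (dupI (@uv k) hrow hc hu hv).
  case: (boolP ((uu k \in J') && (vv k \in J'))) => [/andP[hu hv]|nJ].
    exact: (dupJ (@uv k) hcol hc hu hv).
  have iI := sg_inj nI; have iJ := sg_inj nJ.
  apply: (transfer hA' iI iJ); apply: PA.
    by rewrite card_in_imset.
  by rewrite card_in_imset.
- move=> QA.
  have QA' := Q_tr (A := A') (A' := A) (s := @sg k) hA' QA.
  have PA' := TBA.2 QA'.
  move=> I J hI hJ.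
  have ii : forall S : {set 'I_k.+1}, {in S &, injective (@io k)}.
    by move=> S x y _ _; apply: io_inj.
  apply: (transfer (A := A') (s := @io k) hback (ii I) (ii J)); apply: PA'.
    by rewrite card_imset //; apply: io_inj.
  by rewrite card_imset //; apply: io_inj.
Qed.
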